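(* Let $f(w)=\sum_{n=0}^dc_nw^n$ be a polynomial with complex coefficients and, for $(i,j)\in J$, let $f(\ell_{i,j}^* ):=c_01_{i,j}+\sum_{n\ge1}c_n(\ell_{i,j}^* )^n$. Let $L=\sum_{(i,j)\in J}\ell_{i,j}$ and $\omega_k(z)=(1-zL)^{-1}e_{k,k}$ for $|z|$ small enough. Then for every $j$ with $(j,j)\in J$, $$f(\ell_{j,j}^* )\omega_j(z)=f(\alpha_{j,j}^2z)1_{j,j}\omega_j(z)+\alpha_{j,j}\,Df(\alpha_{j,j}^2z)\,\Omega,$$ where $Df(z)=\frac{f(z)-f(0)}{z}$; and for every off-diagonal $(i,j)\in J$ ($i\neq j$) and every $k$, $$f(\ell_{i,j}^* )\omega_k(z)=f(\alpha_{i,j}^2z)1_{i,j}\omega_k(z).$$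
   Context: Fock space. Let $J\subseteq\{1,2\}\times\{1,2\}$, $(\alpha_{i,j})_{(i,j)\in J}$ positive reals, $\{e_{i,j}:(i,j)\in J\}$ orthonormal vectors and $\mathcal{F}$ the full Fock space over $\bigoplus_{(i,j)\in J}\mathbb{C}e_{i,j}$ with vacuum $\Omega$. The strongly matricially free Fock space $\mathcal{N}\subseteq\mathcal{F}$ is the closed span of $\Omega$ and all simple tensors $e_{i_1,i_2}^{\otimes n_1}\otimes e_{i_2,i_3}^{\otimes n_2}\otimes\dots\otimes e_{i_{m-1},i_m}^{\otimes n_{m-1}}\otimes e_{i_m,i_m}^{\otimes n_m}$ ($m\ge1$, $n_k\ge1$, $i_1\neq\dots\neq i_m$, all pairs in $J$). With $P$ the projection onto $\mathcal{N}$ and $\ell(e)w=e\otimes w$, set $\ell_{i,j}=\alpha_{i,j}P\ell(e_{i,j})|_{\mathcal{N}}$ with adjoints $\ell_{i,j}^*$. Let $\mathcal{N}_{i,j}$ be the closed span of those simple tensors whose first factor is $e_{i,j}$; $1_{j,j}$ is the projection onto $\mathbb{C}\Omega\oplus\mathcal{N}_{j,j}$ and, for $i\ne j$, $1_{i,j}$ is the projection onto $\mathcal{N}\ominus(\mathbb{C}\Omega\oplus\mathcal{N}_{i,i})$. The vectors $e_{k,k}$ used in $\omega_k$ are those with $(k,k)\in J$. *)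

(* Defs.v *)
From HB Require Import structures.
From mathcomp Require Import all_boot all_order all_algebra.
From mathcomp Require Import boolp.
Set Implicit Arguments. Unset Strict Implicit. Unset Printing Implicit Defensive.
Import Order.TTheory GRing.Theory Num.Theory.
Local Open Scope ring_scope.

(* Index pairs (i,j) in {1,2}x{1,2}, encoded as 'I_2 * 'I_2 (1 ~ 0, 2 ~ 1). *)
Definition idx := ('I_2 * 'I_2)%type.
(* Simple tensors e_{a1} (x) ... (x) e_{an} of the orthonormal basis of the
   full Fock space are indexed by words; [::] is the vacuum Omega. *)
Definition word := seq idx.
(* A vector is given by its coordinates in this orthonormal basis. *)
Definition vec (C : Type) := word -> C.

Section Fock.
Variable C : numClosedFieldType.
Variable J : {set idx}.
Variable alpha : idx -> C.

(* The word e_{i_1,i_2}^{n_1} ... e_{i_{m-1},i_m}^{n_{m-1}} e_{i_m,i_m}^{n_m}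
   (blocks indexed k = 0..m-1). *)
Definition block_letter (m : nat) (i : nat -> 'I_2) (k : nat) : idx :=
  if (k.+1 < m)%N then (i k, i k.+1) else (i k, i k).
Definition blockword (m : nat) (i : nat -> 'I_2) (n : nat -> nat) : word :=
  flatten [seq nseq (n k) (block_letter m i k) | k <- iota 0 m].

(* u indexes a basis vector of the strongly matricially free Fock space N. *)
Definition inN (u : word) : Prop :=
  u = [::] \/
  exists (m : nat) (i : nat -> 'I_2) (n : nat -> nat),
    [/\ (0 < m)%N,
        (forall k, (k < m)%N -> (0 < n k)%N),
        (forall k, (k.+1 < m)%N -> i k != i k.+1),
        (forall k, (k < m)%N -> block_letter m i k \in J)
      & u = blockword m i n].

(* Orthogonal projection onto the closed span of the basis vectors u in N
   with keep u. *)
Definition projN (keep : word -> bool) (v : vec C) : vec C :=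
  fun u => if `[< inN u >] && keep u then v u else 0.

Definition P (v : vec C) : vec C := projN (fun _ => true) v.

(* 1_{j,j} : projection onto C Omega (+) N_{j,j};
   1_{i,j} (i != j) : projection onto N (-) (C Omega (+) N_{i,i}). *)
Definition one_ (a : idx) : vec C -> vec C :=
  if a.1 == a.2 then projN (fun u => if u is b :: _ then b == a else true)
  else projN (fun u => if u is b :: _ then b != (a.1, a.1) else false).

(* left creation l(e_a) w = e_a (x) w and its adjoint *)
Definition lcr (a : idx) (v : vec C) : vec C :=
  fun u => if u is b :: t then (if b == a then v t else 0) else 0.
Definition lann (a : idx) (v : vec C) : vec C := fun u => v (a :: u).

Definition ell (a : idx) (v : vec C) : vec C := fun u => alpha a * P (lcr a v) u.
Definition ell_star (a : idx) (v : vec C) : vec C :=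
  fun u => alpha a * P (lann a v) u.

Definition Lop (v : vec C) : vec C := fun u => \sum_(a in J) ell a v u.

Definition delta (s : word) : vec C := fun u => if u == s then 1 else 0.
Definition Omega : vec C := delta [::].
Definition e_ (a : idx) : vec C := delta [:: a].

(* w = omega_k(z) = (1 - z L)^{-1} e_{k,k}, i.e. (1 - z L) w = e_{k,k} *)
Definition is_omega (k : 'I_2) (z : C) (w : vec C) : Prop :=
  forall u, w u - z * Lop w u = e_ (k, k) u.

Definition fell (p : {poly C}) (a : idx) (v : vec C) : vec C :=
  fun u => p`_0 * one_ a v u
           + \sum_(1 <= n < size p) p`_n * iter n (ell_star a) v u.
End Fock.

(* Df(z) = (f(z) - f(0))/z, as the polynomial sum_{n>=1} c_n z^{n-1} *)
Definition Dpoly (C : numClosedFieldType) (p : {poly C}) : {poly C} :=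
  \poly_(i < (size p).-1) p`_i.+1.

(* Main.v *)
Require Import Defs.
From HB Require Import structures.
From mathcomp Require Import all_boot all_order all_algebra.
From mathcomp Require Import boolp ring.
Import Order.TTheory GRing.Theory Num.Theory.

Section Comb.
Variable J : {set idx}.

Definition compat (a b : idx) : bool :=
  if a.1 == a.2 then b == a else b != (a.1, a.1).

Fixpoint good (u : word) : bool :=
  match u with
  | [::] => true
  | a :: t => (a \in J) && match t with
                          | [::] => a.1 == a.2
                          | b :: _ => compat a b && good t
                          end
  end.

Lemma I2 (x y z : 'I_2) : x != y -> z != x -> z = y.
Proof.
by case: x => [[|[|?]] ?] //; case: y => [[|[|?]] ?] //; case: z => [[|[|?]] ?] //=;
  move=> _ _; apply/val_inj.
Qed.

Lemma blockword_S m i n :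
  blockword m.+1 i n =
  nseq (n 0%N) (block_letter m.+1 i 0) ++ blockword m (fun k => i k.+1) (fun k => n k.+1).
Proof.
rewrite /blockword /= -[in LHS](addn0 1%N) iotaDl -map_comp.
congr (_ ++ flatten _); apply: eq_map => k /=.
Qed.

Lemma blockword_head m i n : (0 < m)%N -> (0 < n 0%N)%N ->
  exists t, blockword m i n = block_letter m i 0 :: t.
Proof.
case: m => // m _; rewrite blockword_S; case: (n 0%N) => // k _.
by eexists.
Qed.

Lemma good_nseq_cat a k v : a \in J -> compat a a ->
  good (a :: nseq k a ++ v) = good (a :: v).
Proof.
move=> aJ caa; elim: k => //= k IH.
by rewrite IH /= aJ caa.
Qed.

Lemma good_cons2 a b t : good (a :: b :: t) = (a \in J) && compat a b && good (b :: t).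
Proof. by rewrite /= andbA. Qed.

Lemma inN_good u : inN J u -> good u.
Proof.
case=> [->//|[m [i [n [m0 n0 ii iJ ->]]]]].
elim: m i n m0 n0 ii iJ => // m IH i n _ n0 ii iJ.
rewrite blockword_S.
have := n0 0%N isT; case E: (n 0%N) => [//|k] _.
have bJ := iJ 0%N isT.
case: m IH n0 ii iJ bJ => [|m] IH n0 ii iJ bJ.
  move: bJ; rewrite /block_letter /= => bJ.
  change (good ((i 0%N, i 0%N) :: nseq k (i 0%N, i 0%N) ++ [::])).
  rewrite good_nseq_cat //= ?bJ ?eqxx //.
  by rewrite /compat /= !eqxx.
have G : good (blockword m.+1 (fun k => i k.+1) (fun k => n k.+1)).
  apply: IH => // [k0 kl|k0 kl|k0 kl].
  - exact: n0.
  - exact: ii.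
  - by have := iJ k0.+1 kl; rewrite /block_letter.
have [t Et] := blockword_head m.+1 (fun k => i k.+1) (fun k => n k.+1) (ltn0Sn _) (n0 1%N isT).
have i01 := ii 0%N isT.
set bl := block_letter m.+2 i 0.
have blE : bl = (i 0%N, i 1%N) by [].
set bw := blockword m.+1 _ _ in G Et *.
change (good (bl :: nseq k bl ++ bw)).
rewrite good_nseq_cat; last 2 first.
- exact bJ.
- by rewrite /compat blE /= (negbTE i01) xpair_eqE eqxx /= eq_sym.
rewrite Et good_cons2 -Et G bJ andbT.
rewrite /compat blE /= (negbTE i01) /block_letter.
by case: ifP => _; rewrite xpair_eqE negb_and (eq_sym (i 1%N)) i01.
Qed.

Lemma good_inN u : good u -> inN J u.
Proof.
elim: u => [|a t IH]; first by left.
case: t IH => [|b t] IH /=.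
  move=> /andP[aJ /eqP a12]; right.
  exists 1%N, (fun _ => a.1), (fun _ => 1%N); split => //.
  - by move=> [|k] // _; rewrite /block_letter /= {2}a12 -surjective_pairing.
  - by rewrite /blockword /= /block_letter /= {2}a12 -surjective_pairing.
move=> /and3P[aJ cab gt].
case: (IH gt) => [//|[m [i [n [m0 n0 ii iJ Et]]]]].
case: m m0 n0 ii iJ Et => // m _ n0 ii iJ Et.
have [s Es] := blockword_head m.+1 i n (ltn0Sn m) (n0 0%N isT).
have bE : b = block_letter m.+1 i 0 by move: Et; rewrite Es => -[].
case: (eqVneq a b) => [ab|anb].
  right; exists m.+1, i, (fun k => if k is 0 then (n 0%N).+1 else n k); split => //.
  - by move=> [|k] // kl; apply: n0.
  - by rewrite Et !blockword_S ab bE.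
right.
have off : a.1 != a.2.
  by apply/negP => h; move: cab; rewrite /compat h => /eqP ba; move: anb; rewrite ba eqxx.
have b1 : b.1 = a.2.
  move: cab; rewrite /compat (negbTE off).
  case: (eqVneq b.1 a.1) => h.
    move=> nb; exfalso; move: anb; rewrite eq_sym.
    have b2 : b.2 = a.2.
      apply: (I2 _ _ _ off).
      by apply/negP => /eqP h2; move: nb; rewrite [b]surjective_pairing h h2 eqxx.
    by rewrite [b]surjective_pairing [a]surjective_pairing h b2 eqxx.
  by move=> _; apply: (I2 _ _ _ off h).
have bi : b.1 = i 0%N.
  by rewrite bE /block_letter; case: ifP.
exists m.+2, (fun k => if k is k'.+1 then i k' else a.1),
  (fun k => if k is k'.+1 then n k' else 1%N); split => //.
- by move=> [|k] // kl; apply: n0.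
- move=> [|k] kl /=; first by rewrite -bi b1.
  exact: ii.
- move=> [|k] kl.
  + by rewrite /block_letter /= -bi b1 -surjective_pairing.
  + by have := iJ k kl; rewrite /block_letter.
- rewrite blockword_S /= Et.
  by rewrite /block_letter /= -bi b1 -surjective_pairing.
Qed.

Lemma inNE u : `[< inN J u >] = good u.
Proof. by apply/idP/idP => [/asboolP/inN_good|/good_inN/asboolP]. Qed.

Lemma good_cons b v : good (b :: v) -> good v.
Proof. by case: v => //= c v /and3P[]. Qed.

Lemma good_cat s v : good (s ++ v) -> good v.
Proof. by elim: s => //= b s IH /good_cons /IH. Qed.

End Comb.

Local Open Scope ring_scope.

Lemma nseq_cat_cons (a : idx) n (u : word) : nseq n a ++ a :: u = a :: nseq n a ++ u.
Proof. by elim: n => //= n ->. Qed.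

Lemma horner1 (C : numClosedFieldType) (p : {poly C}) x :
  p.[x] = p`_0 + \sum_(1 <= n < size p) p`_n * x ^+ n.
Proof.
rewrite horner_coef; case E: (size p) => [|s].
  by rewrite big_ord0 big_geq // nth_default ?E // addr0.
rewrite big_ord_recl big_add1 /= big_mkord expr0 mulr1; congr (_ + _).
Qed.

Section W.
Variables (C : numClosedFieldType) (J : {set idx}) (alpha : idx -> C) (k : 'I_2) (z : C) (w : vec C).
Hypotheses (kJ : (k,k) \in J) (hw : is_omega J alpha k z w).

Lemma LopE u : Lop J alpha w u =
  if u is b :: t then (if good J u then alpha b * w t else 0) else 0.
Proof using kJ hw.
rewrite /Lop /ell /P /projN.
case: u => [|b t].
  by rewrite big1 // => a _; rewrite /lcr; case: ifP; rewrite mulr0.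
rewrite inNE andbT; case G: (good J (b :: t)); last first.
  by rewrite big1 // => a _; rewrite mulr0.
have bJ : b \in J by move: G => /= /andP[].
rewrite (bigD1 b) //= big1 ?addr0 /lcr ?eqxx // => a /andP[_ ab].
by rewrite eq_sym (negbTE ab) mulr0.
Qed.

Lemma w_bad u : ~~ good J u -> w u = 0.
Proof using kJ hw.
move=> G; have := hw u; rewrite LopE.
have -> : e_ C (k, k) u = 0.
  rewrite /e_ /delta; case: eqP => // E; move: G; rewrite E /= kJ eqxx.
  by [].
by case: u G => [//|b t] G; rewrite (negbTE G) mulr0 subr0.
Qed.

Lemma w_nil : w [::] = 0.
Proof using kJ hw. by have := hw [::]; rewrite LopE mulr0 subr0. Qed.

Lemma w_cons2 b c t : w (b :: c :: t) =
  if good J (b :: c :: t) then z * alpha b * w (c :: t) else 0.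
Proof using kJ hw.
case: ifP => G; last by rewrite w_bad ?G.
have := hw (b :: c :: t); rewrite LopE G /e_ /delta /=.
by rewrite eqseq_cons andbF => /eqP; rewrite subr_eq0 mulrA => /eqP.
Qed.

Lemma w_single b : w [:: b] = if b == (k, k) then 1 else 0.
Proof using kJ hw.
have := hw [:: b]; rewrite LopE /e_ /delta /= w_nil mulr0.
by case: ifP => _; rewrite mulr0 subr0 => ->; rewrite eqseq_cons andbT.
Qed.


Lemma iter_ell a n u : iter n (ell_star J alpha a) w u = alpha a ^+ n * w (nseq n a ++ u).
Proof using kJ hw.
elim: n u => [|n IH] u; first by rewrite expr0 mul1r.
rewrite iterS /ell_star /P /projN inNE andbT /lann IH nseq_cat_cons.
case: ifP => G; first by rewrite exprS mulrA.
rewrite mulr0 w_bad ?mulr0 //; apply/negP => /(good_cat J (nseq n.+1 a)).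
by rewrite G.
Qed.

Lemma w_pow a n u : u != [::] ->
  w (nseq n a ++ u) = if good J (nseq n a ++ u) then (z * alpha a) ^+ n * w u else 0.
Proof using kJ hw.
move=> hu; elim: n => [|n IH].
  by rewrite /= expr0 mul1r; case: ifP => // /negbT /w_bad.
rewrite [nseq n.+1 a ++ u]/=.
case E: (nseq n a ++ u) IH => [|c t] IH.
  by clear IH; move/(congr1 size): E; rewrite size_cat; case: u hu => // b u _; rewrite addnS.
rewrite w_cons2; case: ifP => // G.
by rewrite IH (good_cons J a) // exprS mulrA.
Qed.

Lemma fell_cons (p : {poly C}) a b t : a \in J -> compat a a ->
  fell J alpha p a w (b :: t) = p`_0 * one_ J a w (b :: t) +
   (if good J (a :: b :: t) then (p.[alpha a ^+ 2 * z] - p`_0) * w (b :: t) else 0).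
Proof using kJ hw.
move=> aJ caa; rewrite /fell; congr (_ + _).
rewrite (horner1 _ p) addrC addKr.
have -> : alpha a ^+ 2 * z = alpha a * (z * alpha a) by ring.
case: ifP => G.
  rewrite mulr_suml; apply: eq_big_nat => n /andP[n1 _].
  rewrite iter_ell w_pow //; case: n n1 => // n _.
  rewrite -[nseq n.+1 a ++ _]/(a :: (nseq n a ++ b :: t)) good_nseq_cat // G.
  by rewrite [in RHS]exprMn !mulrA.
rewrite big1_seq // => n /andP[_]; rewrite mem_index_iota => /andP[n1 _].
rewrite iter_ell w_pow //; case: n n1 => // n _.
rewrite -[nseq n.+1 a ++ _]/(a :: (nseq n a ++ b :: t)) good_nseq_cat // G.
by rewrite mulr0 mulr0.
Qed.

Lemma w_diag_pow n : w (nseq n.+1 (k, k)) = (z * alpha (k, k)) ^+ n.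
Proof using kJ hw.
elim: n => [|n IH]; first by rewrite w_single eqxx expr0.
have G : good J (nseq n.+2 (k, k)).
  have := good_nseq_cat J (k, k) n.+1 [::] kJ.
  rewrite cats0 => ->; first by rewrite /= kJ eqxx.
  by rewrite /compat /= !eqxx.
move: G; rewrite [nseq n.+2 _]/= w_cons2 => ->.
by rewrite IH exprS.
Qed.

End W.

Theorem proposition6p1 (C : numClosedFieldType) (J : {set idx})
  (alpha : idx -> C) (halpha : forall a, a \in J -> 0 < alpha a)
  (p : {poly C}) (z : C) (hz : `|z| * (\sum_(a in J) alpha a) < 1) :
  (forall (j : 'I_2) (w : vec C), (j, j) \in J -> is_omega J alpha j z w ->
     forall u : word,
       fell J alpha p (j, j) w u =
         p.[alpha (j, j) ^+ 2 * z] * one_ J (j, j) w u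
         + alpha (j, j) * (Dpoly p).[alpha (j, j) ^+ 2 * z] * Omega C u)
  /\
  (forall (i j k : 'I_2) (w : vec C), (i, j) \in J -> i != j ->
     (k, k) \in J -> is_omega J alpha k z w ->
     forall u : word,
       fell J alpha p (i, j) w u = p.[alpha (i, j) ^+ 2 * z] * one_ J (i, j) w u).
Proof.
split.
- move=> j w jJ hw [|b t].
    rewrite /fell /one_ eqxx /projN inNE /= (w_nil _ _ _ _ _ _ jJ hw) !mulr0 !add0r.
    rewrite /Omega /delta eqxx mulr1.
    rewrite big_add1 big_mkord /Dpoly horner_poly mulr_sumr; apply: eq_bigr => i _.
    rewrite (iter_ell _ _ _ _ _ _ jJ hw) cats0 (w_diag_pow _ _ _ _ _ _ jJ hw).
    have -> : (alpha (j, j) ^+ 2 * z) ^+ i = alpha (j, j) ^+ i * (z * alpha (j, j)) ^+ i.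
      by rewrite -exprMn; congr (_ ^+ _); ring.
    rewrite exprS; ring.
  have cjj : compat (j, j) (j, j) by rewrite /compat /= !eqxx.
  rewrite (fell_cons _ _ _ _ _ _ jJ hw) // good_cons2 jJ /one_ eqxx /projN inNE.
  have -> : Omega C (b :: t) = 0 by [].
  rewrite mulr0 addr0 /compat eqxx.
  by case: (good J (b :: t)) => /=; case: (b == (j, j)) => /=; ring.
- move=> i j k w aJ ij kJ hw.
  have Hij : ((i, j).1 == (i, j).2) = false by exact: negbTE ij.
  have caa : compat (i, j) (i, j).
    by rewrite /compat Hij xpair_eqE eqxx /= eq_sym.
  case=> [|b t].
    rewrite /fell /one_ Hij /projN /= andbF !mulr0 add0r.
    rewrite big1_seq // => n /andP[_]; rewrite mem_index_iota => /andP[n1 _].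
    rewrite (iter_ell _ _ _ _ _ _ kJ hw) cats0; case: n n1 => // n _.
    rewrite (w_bad _ _ _ _ _ _ kJ hw) ?mulr0 //.
    have := good_nseq_cat J (i, j) n [::] aJ caa; rewrite cats0 => ->.
    by rewrite /= aJ (negbTE ij).
  rewrite (fell_cons _ _ _ _ _ _ kJ hw) // good_cons2 aJ /one_ Hij /projN inNE.
  rewrite /compat Hij.
  by case: (good J (b :: t)) => /=; case: (b != (i, i)) => /=; ring.
Qed.
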